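(* Let $K$ be a finite field of characteristic $p$ and order $q=p^n$, and let $s$ be a positive integer with $\gcd(s,q-1)=1$ that is nondegenerate over $K$. If $u\in K$ and $v_p(W_u)\ge v_p(q)=n$, then $W_u=0$. In particular, either $v_p(W_u)<v_p(q)$ or $v_p(W_u)=\infty$.
   Context: $\zeta=\exp(2\pi i/p)$, $\psi(x)=\zeta^{\mathrm{Tr}(x)}$ with $\mathrm{Tr}$ the absolute trace of $K$ to $\mathbb{F}_p$; $W_u=\sum_{x\in K}\psi(x^s-ux)$. $v_p$ denotes the $p$-adic valuation on $\mathbb{Q}(\zeta)$ extending the usual one on $\mathbb{Q}$ (so $v_p(p)=1$, $v_p(\zeta-1)=1/(p-1)$, $v_p(0)=\infty$). The exponent $s$ is degenerate over $K$ if $s\equiv p^k\pmod{q-1}$ for some integer $k$, and nondegenerate otherwise. *)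

(* Defs.v *)
From HB Require Import structures.
From mathcomp Require Import all_boot all_order all_algebra all_field.
Set Implicit Arguments. Unset Strict Implicit. Unset Printing Implicit Defensive.
Import Order.TTheory GRing.Theory Num.Theory.
Local Open Scope ring_scope.

(* zeta = exp(2 pi i / p) in algC: p.-root (-1) is the p-th root of -1 of
   minimal nonnegative argument, i.e. exp(i pi / p); its square is exp(2 pi i/p). *)
Definition zeta (p : nat) : algC := (p.-root (-1)) ^+ 2.

Definition absTr (K : finFieldType) (p n : nat) (x : K) : K :=
  \sum_(i < n) x ^+ (p ^ i).

(* the residue k in {0,..,p-1} with k%:R = Tr x (Tr x lies in the prime field) *)
Definition tr_res (K : finFieldType) (p n : nat) (x : K) : nat :=
  odflt ord0 [pick k : 'I_p.+1 | (k < p)%N && ((k%:R : K) == absTr p n x)].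

Definition psi (K : finFieldType) (p n : nat) (x : K) : algC :=
  zeta p ^+ tr_res p n x.

Definition W (K : finFieldType) (p n s : nat) (u : K) : algC :=
  \sum_(x : K) psi p n (x ^+ s - u * x).

Definition degenerate (p q s : nat) : Prop :=
  exists k : nat, s = p ^ k %[mod q.-1].

(* v_p(x) >= m, for x in Z[zeta] : since (p) = (1-zeta)^(p-1) is the unique
   (totally ramified) prime above p, v_p(x) >= m iff p^m divides x in the
   algebraic integers. *)
Definition vp_ge (p m : nat) (x : algC) : bool := ((p ^ m)%:R %| x)%A.

(* Main.v *)
Require Import Defs.
From HB Require Import structures.
From mathcomp Require Import all_boot all_order all_algebra all_field.
From mathcomp Require Import zify.
Set Implicit Arguments. Unset Strict Implicit. Unset Printing Implicit Defensive.
Import Order.TTheory GRing.Theory Num.Theory.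
Local Open Scope ring_scope.

Lemma zeta_prim (p : nat) : prime p -> p.-primitive_root (zeta p).
Proof.
move=> hp; have p0 := prime_gt0 hp; have p1 := prime_gt1 hp.
set r := p.-root (-1 : algC).
have rp : r ^+ p = -1 by rewrite /r rootCK.
have zp : zeta p ^+ p = 1 by rewrite /zeta -exprM mulnC exprM rp sqrrN expr1n.
have [m pm mdvd] := prim_order_exists p0 zp.
have /orP[/eqP m1|/eqP mp] : (m == 1%N) || (m == p) by move/primeP: (hp) => [_ H]; exact: H.
  2: by rewrite mp in pm.
exfalso; move: (prim_expr_order pm); rewrite m1 expr1 /zeta -/r.
move/eqP; rewrite sqrf_eq1 => /orP[/eqP r1|/eqP r1].
  move: rp; rewrite r1 expr1n => h; have := lt_trans (@ltrN10 algC) ltr01.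
  by rewrite -h ltxx.
have : r < 0 by rewrite r1 ltrN10.
by rewrite /r rootC_lt0.
Qed.

Lemma absTr_frob (K : finFieldType) (p n : nat) :
  p \in [pchar K] -> #|K| = (p ^ n)%N -> forall x : K, (absTr p n x) ^+ p = absTr p n x.
Proof.
move=> hc hK x; rewrite /absTr.
case: n hK => [|n] hK; first by rewrite big_ord0 expr0n; case: p hc {hK} => // /pcharf0P; rewrite eqxx.
rewrite -(pFrobenius_autE hc) rmorph_sum /=.
under eq_bigr => i _ do rewrite pFrobenius_autE -exprM -expnSr.
rewrite big_ord_recr big_ord_recl /= -hK expf_card expn0 expr1 addrC.
by [].
Qed.

Lemma prime_field_elt (K : finFieldType) (p : nat) :
  prime p -> p \in [pchar K] -> forall y : K, y ^+ p = y -> exists k, (k < p)%N /\ k%:R = y.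
Proof.
move=> hp hc y hy.
have [//|hn] := boolP [exists k : 'I_p, (k%:R == y)].
  by case/existsP=> k /eqP <-; exists k.
pose P : {poly K} := 'X^p - 'X.
have sP : size P = p.+1 by rewrite /P size_polyDl ?size_polyXn // size_polyN size_polyX ltnS prime_gt1.
have P0 : P != 0 by rewrite -size_poly_eq0 sP.
exfalso; have H := max_poly_roots P0 (rs := y :: [seq (val k)%:R | k : 'I_p]).
rewrite sP /= size_map size_enum_ord ltnn in H; apply: notF; apply: H.
  rewrite /= /root /P !hornerE hy subrr eqxx /=.
  apply/allP=> z /mapP [k _ ->]; rewrite /root !hornerE -(pFrobenius_autE hc) rmorph_nat subrr //.
apply/andP; split.
  apply/mapP=> -[k _ ek]; move/negP: hn; apply; apply/existsP; exists k; by rewrite ek.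
rewrite map_inj_uniq ?enum_uniq // => i j /eqP.
wlog le : i j / (i <= j)%N.
  by move=> H; case: (leqP i j) => [|/ltnW] h e; [|apply/esym]; apply: H => //; rewrite eq_sym.
rewrite eq_sym -subr_eq0 -natrB // -(dvdn_pcharf hc) => d; apply/val_inj/eqP => /=.
rewrite eqn_leq le /= -subn_eq0; apply/eqP.
case: (posnP (j - i)) => // h; have := dvdn_leq h d; have := ltn_ord j; lia.
Qed.

Lemma tr_resP (K : finFieldType) (p n : nat) :
  prime p -> p \in [pchar K] -> #|K| = (p ^ n)%N -> forall x : K,
  (tr_res p n x < p)%N /\ (tr_res p n x)%:R = absTr p n x.
Proof.
move=> hp hc hK x; rewrite /tr_res.
case: pickP => [k /andP[kp /eqP ->] //|H].
have [k [kp ek]] := prime_field_elt hp hc (absTr_frob hc hK x).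
have kp' : (k < p.+1)%N by apply: ltnW.
by move: (H (Ordinal kp')) => /=; rewrite kp ek eqxx.
Qed.

Lemma tr_res0 (K : finFieldType) (p n : nat) :
  prime p -> p \in [pchar K] -> #|K| = (p ^ n)%N -> tr_res p n (0 : K) = 0%N.
Proof.
move=> hp hc hK; have [lt e] := tr_resP hp hc hK 0.
have : (p %| tr_res p n (0 : K)%R)%N.
  by rewrite (dvdn_pcharf hc) e /absTr big1 // => i _; rewrite expr0n gtn_eqF // expn_gt0 prime_gt0.
move=> d; case: (posnP (tr_res p n (0:K)%R)) => // h; have := dvdn_leq h d; lia.
Qed.

Lemma ord_mul_inj (p b : nat) (p0 : (0 < p)%N) : coprime b p ->
  injective (fun a : 'I_p => Ordinal (ltn_pmod (a * b) p0)).
Proof.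
move=> cop a a' /(congr1 val) /= e.
wlog le : a a' e / (a <= a')%N.
  by move=> H; case: (leqP a a') => [|/ltnW] h; [|apply/esym]; apply: H.
apply/val_inj/eqP => /=.
have : (a' * b == a * b %[mod p])%N by apply/eqP.
rewrite eqn_mod_dvd ?leq_mul2r ?le ?orbT //.
rewrite -mulnBl Gauss_dvdl; last by rewrite coprime_sym.
move=> d; case: (posnP (a' - a)) => [|h]; first by lia.
have := dvdn_leq h d; have := ltn_ord a'; lia.
Qed.

Lemma geom_rat (p : nat) (w : algC) : w ^+ p = 1 -> \sum_(b < p) w ^+ b \in Crat.
Proof.
move=> wp; have [->|w1] := eqVneq w 1.
  by under eq_bigr do rewrite expr1n; rewrite sumr_const card_ord rpred_nat.
have := subrX1 w p; rewrite wp subrr => /esym/eqP; rewrite mulf_eq0 subr_eq0 (negbTE w1) /=.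
by move/eqP ->; apply: rpred0.
Qed.

Lemma key (I : finType) (p : nat) (z : algC) (t : I -> nat) :
  prime p -> p.-primitive_root z ->
  ((#|I|)%:R %| \sum_i z ^+ t i)%A -> \sum_i z ^+ t i != 0 ->
  exists c, forall i, z ^+ t i = c.
Proof.
move=> hp pz hdiv nz.
have p0 := prime_gt0 hp; have p1 := prime_gt1 hp.
pose o0 : 'I_p := Ordinal p0.
set W := \sum_i z ^+ t i in hdiv nz.
set q := #|I|.
have q0 : (0 < q)%N.
  rewrite lt0n; apply: contra nz => /eqP/card0_eq e.
  by rewrite /W big_pred0.
have qC0 : (q%:R : algC) != 0 by rewrite pnatr_eq0 -lt0n.
pose G (c : nat) := \sum_i z ^+ (c * t i).
have GE : G 1%N = W by rewrite /G; under eq_bigr do rewrite mul1n.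
have Gmod : forall c, G c = G (c %% p)%N.
  by move=> c; apply: eq_bigr => i _; rewrite -[RHS](prim_expr_mod pz) modnMml prim_expr_mod.
have G0 : G 0%N = q%:R.
  by rewrite /G; under eq_bigr do rewrite mul0n expr0; rewrite sumr_const.
have Gaut : forall c, coprime c p -> exists nu : {rmorphism algC -> algC}, nu W = G c.
  move=> c cop; have [nu hnu] := Qn_aut_exists cop; exists nu.
  rewrite /W rmorph_sum; apply: eq_bigr => i _.
  by rewrite rmorphXn /= hnu ?(prim_expr_order pz) // -exprM.
have cop_ord : forall a : 'I_p, a != o0 -> coprime a p.
  move=> a a0; rewrite coprime_sym prime_coprime //; apply/negP => /(dvdn_leq _) h.
  have : (0 < a)%N by rewrite lt0n.
  by move=> /h; rewrite leqNgt ltn_ord.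
have hW : W / q%:R \in Aint by move: hdiv; rewrite unfold_in (negbTE qC0).
have Gint : forall a : 'I_p, G a / q%:R \in Aint.
  move=> a; have [->|a0] := eqVneq a o0; first by rewrite G0 divff // Aint1.
  have [nu <-] := Gaut _ (cop_ord a a0).
  by rewrite -(rmorph_nat nu) -fmorph_div Aint_aut.
have Gnz : forall a : 'I_p, G a != 0.
  move=> a; have [->|a0] := eqVneq a o0; first by rewrite G0.
  by have [nu <-] := Gaut _ (cop_ord a a0); rewrite fmorph_eq0.
have znorm : `|z| = 1.
  apply/eqP; rewrite -(pexpr_eq1 p0) ?normr_ge0 // -normrX (prim_expr_order pz) normr1 //.
have Gle : forall c, `|G c| <= q%:R.
  move=> c; apply: le_trans (ler_norm_sum _ _ _) _.
  by under eq_bigr do rewrite normrX znorm expr1n; rewrite sumr_const.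
pose M := \prod_(a : 'I_p) G a.
have Mrat : M \in Crat.
  pose S := \sum_(b : 'I_p) \prod_(a : 'I_p) G (a * b)%N.
  have S1 : S = q%:R ^+ p + M *+ p.-1.
    rewrite /S (bigD1 o0) //=; congr (_ + _).
      by under eq_bigr do rewrite muln0; rewrite G0 prodr_const card_ord.
    have -> : p.-1 = #|predC1 o0| by rewrite cardC1 card_ord.
    rewrite -sumr_const; apply: eq_bigr => b b0.
    have hinj := @ord_mul_inj p b p0 (cop_ord b b0).
    rewrite [M](reindex_inj hinj) /=; apply: eq_bigr => a _; exact: Gmod.
  have S2 : S \in Crat.
    rewrite /S; under eq_bigr do rewrite bigA_distr_bigA /=.
    rewrite exchange_big /=; apply: rpred_sum => f _.
    pose w := \prod_(a : 'I_p) z ^+ (a * t (f a))%N.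
    have -> : \sum_(b : 'I_p) \prod_(a : 'I_p) z ^+ (a * b * t (f a))%N = \sum_(b < p) w ^+ b.
      apply: eq_bigr => b _; rewrite /w -prodrXl; apply: eq_bigr => a _.
      by rewrite -exprM mulnAC.
    apply: geom_rat; rewrite /w -prodrXl big1 // => a _.
    by rewrite -exprM mulnC exprM (prim_expr_order pz) expr1n.
  have p10 : ((p.-1)%:R : algC) != 0 by rewrite pnatr_eq0 -lt0n; lia.
  have -> : M = (S - q%:R ^+ p) / (p.-1)%:R by rewrite S1 addrC addKr -mulr_natr mulfK.
  by rewrite rpredM ?rpredV ?rpredB ?rpredX ?rpred_nat.
have qp0 : (q%:R : algC) ^+ p != 0 by rewrite expf_neq0.
have Mdiv : M / q%:R ^+ p = \prod_(a : 'I_p) (G a / q%:R).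
  by rewrite prodf_div prodr_const card_ord.
have Mint : M / q%:R ^+ p \in Num.int.
  apply: Cint_rat_Aint; first by rewrite rpredM ?rpredV ?rpredX ?rpred_nat.
  by rewrite Mdiv rpred_prod.
have Mnz : M / q%:R ^+ p != 0.
  by rewrite mulf_neq0 ?invr_eq0 //; apply/prodf_neq0 => a _.
have Mge : q%:R ^+ p <= `|M|.
  have := norm_intr_ge1 Mint Mnz; rewrite normrM normfV.
  by rewrite ler_pdivlMr ?mul1r ?normr_gt0 // normrX normr_nat.
pose o1 : 'I_p := Ordinal p1.
have Mle : `|M| <= `|G 1%N| * q%:R ^+ p.-1.
  rewrite /M normr_prod (bigD1 o1) //= ler_wpM2l //.
  have -> : p.-1 = #|predC1 o1| by rewrite cardC1 card_ord.
  rewrite -prodr_const; apply: ler_prod => a _; rewrite normr_ge0 /=; exact: Gle.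
have G1ge : q%:R <= `|W|.
  rewrite -GE; have : q%:R * q%:R ^+ p.-1 <= `|G 1%N| * q%:R ^+ p.-1.
    by rewrite -exprS prednK // (le_trans Mge Mle).
  by rewrite ler_pM2r // exprn_gt0 // ltr0n.
have eqn : `|W| = \sum_i `|z ^+ t i|.
  under eq_bigr do rewrite normrX znorm expr1n.
  rewrite sumr_const; apply/eqP; rewrite eq_le G1ge andbT.
  by rewrite -GE Gle.
have [c _ hc] := normC_sum_eq1 eqn (fun i _ => etrans (normrX _ _) (etrans (congr1 (fun x => x ^+ _) znorm) (expr1n _ _))).
by exists c => i; apply: hc.
Qed.

Lemma frob_iter (K : finFieldType) (p : nat) (a b : K) : p \in [pchar K] ->
  forall i, (a - b) ^+ (p ^ i) = a ^+ (p ^ i) - b ^+ (p ^ i).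
Proof.
move=> hc; elim=> [|i IH]; first by rewrite expn0 !expr1.
by rewrite expnSr !exprM IH -!(pFrobenius_autE hc) rmorphB.
Qed.

Lemma exp_red (K : finFieldType) (q m : nat) (x : K) : #|K| = q ->
  (0 < m)%N -> (0 < m %% q.-1)%N -> x ^+ m = x ^+ (m %% q.-1).
Proof.
move=> hK m0 r0; have [->|x0] := eqVneq x 0; first by rewrite !expr0n !gtn_eqF.
have xq : x ^+ q.-1 = 1.
  have q0 : (0 < q)%N by rewrite -hK; apply: (leq_trans _ (finNzRing_gt1 K)).
  apply: (mulIf x0); rewrite mul1r -exprSr prednK // -hK expf_card //.
by rewrite {1}(divn_eq m q.-1) exprD mulnC exprM xq expr1n mul1r.
Qed.

Lemma trace_zero_degenerate (K : finFieldType) (p n s : nat) (u : K) :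
  prime p -> p \in [pchar K] -> #|K| = (p ^ n)%N -> (0 < s)%N -> coprime s (p ^ n).-1 ->
  (forall x : K, absTr p n (x ^+ s - u * x) = 0) -> degenerate p (p ^ n) s.
Proof.
move=> hp hc hK s0 cop H.
have p1 := prime_gt1 hp; have p0 := prime_gt0 hp.
set q := (p ^ n)%N in hK cop *.
have q1 : (1 < q)%N by rewrite -hK finNzRing_gt1.
case: (leqP q.-1 1) => hq.
  rewrite /degenerate; exists 0%N; have e1 : q.-1 = 1%N by lia.
  by rewrite e1 !modn1.
have [/existsP [k /eqP hk]|hnd] := boolP [exists k : 'I_n, (s == p ^ k %[mod q.-1])%N].
  by rewrite /degenerate; exists (val k).
exfalso.
have n0 : (0 < n)%N.
  rewrite lt0n; apply/negP => /eqP n0'; move: q1; rewrite /q n0' expn0.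
  by [].
have cpq : coprime p q.-1.
  have : coprime q.-1 q by apply: coprimePn; lia.
  have pq : (p %| q)%N by rewrite /q dvdn_exp.
  by move=> h; rewrite coprime_sym (coprime_dvdr pq h).
have pi_lt : forall i : 'I_n, (p ^ i < q.-1)%N.
  move=> i; have : (p ^ i.+1 <= q)%N by rewrite leq_pexp2l.
  rewrite expnS; have : (2 * p ^ i <= p * p ^ i)%N by rewrite leq_mul2r p1 orbT.
  lia.
pose e (i : nat) := ((s * p ^ i) %% q.-1)%N.
have e_pos : forall i, (0 < e i)%N.
  move=> i; rewrite lt0n; apply/negP => hd.
  have d : (q.-1 %| s * p ^ i)%N by rewrite /dvdn.
  have : coprime (s * p ^ i) q.-1 by rewrite coprimeMl cop coprimeXl.
  by rewrite /coprime (gcdn_idPr d) => /eqP h; move: hq; rewrite h.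
pose i0 : 'I_n := Ordinal n0.
have ne_pi : forall i : 'I_n, e 0%N != (p ^ i)%N.
  move=> i; apply/negP => /eqP h; move/negP: hnd; apply; apply/existsP; exists i.
  rewrite /e muln1 in h; apply/eqP; rewrite h modn_small //; exact: pi_lt.
have ne_e : forall i : 'I_n, i != i0 -> e 0%N != e i.
  move=> i ni; apply/negP => /eqP h.
  have : (s * p ^ i == s %[mod q.-1])%N by rewrite /e muln1 in h; apply/eqP.
  rewrite eqn_mod_dvd ?leq_pmulr ?expn_gt0 ?p0 // -{2}[s]muln1 -mulnBr Gauss_dvdr; last first.
    by rewrite coprime_sym.
  move=> d; have := pi_lt i; have i1 : (0 < i)%N by rewrite lt0n; apply: contra ni => /eqP hi; apply/eqP/val_inj.
  have : (p ^ 1 <= p ^ i)%N by rewrite leq_pexp2l.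
  case: (posnP (p ^ i - 1)) => [|h1]; first by lia.
  have := dvdn_leq h1 d; lia.
pose P : {poly K} := \sum_(i < n) ('X^(e i) - (u ^+ (p ^ i)) *: 'X^(p ^ i)).
have Pcoef : forall j, P`_j = \sum_(i < n) ((j == e i)%N%:R - u ^+ (p ^ i) * (j == p ^ i)%N%:R).
  by move=> j; rewrite coef_sum; apply: eq_bigr => i _; rewrite coefB coefZ !coefXn.
have Pval : forall x, P.[x] = absTr p n (x ^+ s - u * x).
  move=> x; rewrite /absTr horner_sum; apply: eq_bigr => i _.
  rewrite frob_iter // -exprM exprMn !hornerE -(exp_red x hK) //.
    by rewrite muln_gt0 s0 expn_gt0 p0.
  exact: e_pos.
have P0 : P = 0.
  apply/eqP; apply: contraT => Pnz.
  have := max_poly_roots Pnz (rs := enum K).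
  rewrite enum_uniq -cardE hK.
  have -> : all (root P) (enum K) by apply/allP => x _; rewrite /root Pval H.
  move=> /(_ isT isT) hlt.
  have : (size P <= q.-1)%N.
    apply/leq_sizeP => j hj; rewrite Pcoef big1 // => i _.
    rewrite !gtn_eqF ?mulr0 ?subrr //; first exact: leq_trans (pi_lt i) hj.
    by apply: leq_trans hj; rewrite ltn_pmod //; lia.
  by move=> h2; have := leq_trans hlt h2; rewrite ltnNge leq_pred.
have : P`_(e 0%N) = 1.
  rewrite Pcoef (bigD1 i0) //= eqxx (negbTE (ne_pi i0)) mulr0 subr0 big1 ?addr0 //.
  by move=> i ni; rewrite (negbTE (ne_pi i)) (negbTE (ne_e i ni)) mulr0 subrr.
by rewrite P0 coef0 => /esym/eqP; rewrite oner_eq0.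
Qed.

Theorem lemma3p4 (K : finFieldType) (p n : nat) (s : nat)
    (hp : prime p) (hchar : p \in [pchar K]) (hcard : #|K| = (p ^ n)%N)
    (hs : (0 < s)%N) (hcop : coprime s (p ^ n).-1)
    (hnd : ~ degenerate p (p ^ n) s) (u : K) :
  vp_ge p n (W p n s u) -> W p n s u = 0.
Proof.
move=> hv; apply/eqP; apply: contraT => nz; exfalso; apply: hnd.
have pz := zeta_prim hp.
pose t (x : K) := tr_res p n (x ^+ s - u * x).
have hW : W p n s u = \sum_x zeta p ^+ t x by [].
rewrite hW in hv nz.
have hv' : ((#|K|)%:R %| \sum_x zeta p ^+ t x)%A by rewrite hcard.
have [c hc] := key hp pz hv' nz.
have t0 : t 0 = 0%N by rewrite /t expr0n gtn_eqF // mulr0 subrr tr_res0.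
have c1 : c = 1 by rewrite -(hc 0) t0 expr0.
apply: (@trace_zero_degenerate K p n s u hp hchar hcard hs hcop) => x.
have [lt e] := tr_resP hp hchar hcard (x ^+ s - u * x).
rewrite -e; have : (p %| t x)%N by rewrite (prim_order_dvd pz) hc c1.
move=> d; have -> : tr_res p n (x ^+ s - u * x) = 0%N.
  case: (posnP (t x)) => // h; have := dvdn_leq h d; rewrite /t in h *; lia.
by [].
Qed.
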